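(* Let $K$ be a finite simplicial complex, let $\sigma_i^{(q)}$ be a $q$-simplex and $\sigma_j^{(q')}$ a $q'$-simplex of $K$, and suppose that $\sigma_i^{(q)}\sim_{L_{p^*}}\sigma_j^{(q')}$ for some integer $p\ge 0$. Put $p'=q+q'-p$. If $\sigma_i^{(q)}\not\sim_{U_{p'}}\sigma_j^{(q')}$, then $\sigma_i^{(q)}\not\sim_{U_{p'+h}}\sigma_j^{(q')}$ for every integer $h\geq 1$.
   Context: $K$ is a finite abstract simplicial complex: a finite collection of nonempty finite vertex sets (simplices) closed under taking nonempty subsets. A $q$-simplex $\sigma^{(q)}$ has $q+1$ vertices; a face of a simplex is a simplex of $K$ contained in it as a set (a simplex is a face of itself). $p$-lower adjacency: $\sigma^{(q)}\sim_{L_p}\sigma^{(q')}$ iff there is a $p$-simplex $\tau^{(p)}$ of $K$ with $\tau^{(p)}\subseteq\sigma^{(q)}$ and $\tau^{(p)}\subseteq\sigma^{(q')}$. Strict $p$-lower adjacency: $\sigma^{(q)}\sim_{L_{p^*}}\sigma^{(q')}$ iff $\sigma^{(q)}\sim_{L_p}\sigma^{(q')}$ and $\sigma^{(q)}\not\sim_{L_{p+1}}\sigma^{(q')}$. $p$-upper adjacency: $\sigma^{(q)}\sim_{U_p}\sigma^{(q')}$ iff there is a $p$-simplex $\tau^{(p)}$ of $K$ with $\sigma^{(q)}\subseteq\tau^{(p)}$ and $\sigma^{(q')}\subseteq\tau^{(p)}$. *)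

(* Defs.v *)
From mathcomp Require Import all_boot.
Set Implicit Arguments. Unset Strict Implicit. Unset Printing Implicit Defensive.

Definition simplicial_complex (T : finType) (K : {set {set T}}) : Prop :=
  (forall s, s \in K -> s != set0) /\
  (forall s t : {set T}, s \in K -> t \subset s -> t != set0 -> t \in K).

Definition is_simplex (T : finType) (K : {set {set T}}) (q : nat) (s : {set T}) : Prop :=
  s \in K /\ #|s| = q.+1.

Definition lower_adj (T : finType) (K : {set {set T}}) (p : nat) (s s' : {set T}) : Prop :=
  exists tau, is_simplex K p tau /\ tau \subset s /\ tau \subset s'.

Definition strict_lower_adj (T : finType) (K : {set {set T}}) (p : nat) (s s' : {set T}) : Prop :=
  lower_adj K p s s' /\ ~ lower_adj K p.+1 s s'.

Definition upper_adj (T : finType) (K : {set {set T}}) (p : nat) (s s' : {set T}) : Prop :=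
  exists tau, is_simplex K p tau /\ s \subset tau /\ s' \subset tau.

(* Main.v *)
Require Import Defs.
From mathcomp Require Import all_boot.
From mathcomp Require Import zify.

Lemma sub_card (T : finType) (k : nat) (A : {set T}) :
  k <= #|A| -> exists B : {set T}, B \subset A /\ #|B| = k.
Proof.
elim: k => [|k IH] Hk.
  by exists set0; rewrite sub0set cards0.
have [B [BA cB]] := IH (ltnW Hk).
have : ~~ (A \subset B).
  apply/negP => AB; have := subset_leq_card AB; lia.
case/subsetPn => x xA xB.
exists (x |: B); split.
  by rewrite subUset sub1set xA BA.
by rewrite cardsU1 xB cB.
Qed.

Theorem mainTheorem1 (T : finType) (K : {set {set T}}) (q q' p : nat)
    (s s' : {set T}) :
  simplicial_complex K ->
  is_simplex K q s -> is_simplex K q' s' ->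
  strict_lower_adj K p s s' ->
  ~ upper_adj K (q + q' - p) s s' ->
  forall h : nat, 1 <= h -> ~ upper_adj K (q + q' - p + h) s s'.
Proof.
move=> [Kne Kcl] [sK cs] [s'K cs'] [[tau [[tK ct] [ts ts']]] Nl] Nu h _.
move=> [t0 [[t0K ct0] [st0 s't0]]].
have cI1 : p.+1 <= #|s :&: s'|.
  rewrite -ct; apply: subset_leq_card; by rewrite subsetI ts ts'.
have cI2 : #|s :&: s'| <= p.+1.
  rewrite leqNgt; apply/negP => H.
  have [B [BI cB]] := @sub_card _ _ _ H.
  apply: Nl; exists B; split; last first.
    by move: BI; rewrite subsetI => /andP [] .
  split=> //; apply: (Kcl s) => //.
    by apply: subset_trans BI (subsetIl _ _).
  by rewrite -card_gt0 cB.
have cU := cardsUI s s'. have cIs : #|s :&: s'| <= #|s| by apply: subset_leq_card; apply: subsetIl.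
apply: Nu; exists (s :|: s'); split; last by rewrite subsetUl subsetUr.
split; last by lia.
apply: (Kcl t0) => //; first by rewrite subUset st0 s't0.
rewrite -card_gt0; lia.
Qed.
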